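(* If $r_{\min}<1$ and $\eta>\max\{\frac{r_{\min}}2,\frac{r_{\max}}n\}$, then the set $E_1=\{(x_1,\dots,x_n)\in[0,1]^n:\max_{i,j\in\mathcal V}|x_i-x_j|\ge1\}$ is finite-time robustly reachable from $[0,1]^n$ under control protocol (C1).
   Context: Fix $n\ge3$, $\mathcal V=\{1,\dots,n\}$, confidence thresholds $r_i\in(0,1]$, $r_{\min}=\min_ir_i$, $r_{\max}=\max_ir_i$, $\eta>0$. States $x(t)\in[0,1]^n$. Neighbor set $\mathcal N_i(t)=\{j:|x_j(t)-x_i(t)|\le r_i\}$ (contains $i$), $\Pi_{[0,1]}(y)=\min\{1,\max\{0,y\}\}$. Control protocol (C1): $x_i(t+1)=\Pi_{[0,1]}\big(|\mathcal N_i(t)|^{-1}\sum_{j\in\mathcal N_i(t)}x_j(t)+u_i(t)+b_i(t)\big)$, where $\delta_i(t)\in(0,\eta)$ is a chosen parameter, $u_i(t)\in[-\eta+\delta_i(t),\eta-\delta_i(t)]$ a chosen control input, $b_i(t)\in[-\delta_i(t),\delta_i(t)]$ an arbitrary uncertainty; $\delta_i(t),u_i(t)$ may depend on $x(0),\dots,x(t)$. A set $S\subseteq[0,1]^n$ is finite-time robustly reachable from $[0,1]^n$ under the protocol if there exist constants $T>0$ and $\varepsilon\in(0,\eta)$, independent of $x(0)$, such that for every $x(0)\in[0,1]^n$, either $x(0)\in S$, or one can choose $\delta_i(t)\in[\varepsilon,\eta)$ and $u_i(t)\in[-\eta+\delta_i(t),\eta-\delta_i(t)]$ for $i\in\mathcal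 V$, $0\le t<T$, guaranteeing that for arbitrary $b_i(t)\in[-\delta_i(t),\delta_i(t)]$ there is $t\in[1,T]$ with $x(t)\in S$. *)

(* Defs.v *)
(* classical reals. Agents are indexed 0..n-1 (paper: 1..n). *)
From Stdlib Require Import Reals Lra List.
Import ListNotations.
Open Scope R_scope.

(* states, thresholds, inputs: functions nat -> R, only indices < n matter *)
Definition state := nat -> R.

Definition in_unit_cube (n : nat) (x : state) : Prop :=
  forall i, (i < n)%nat -> 0 <= x i <= 1.

Definition proj01 (y : R) : R := Rmin 1 (Rmax 0 y).

Definition nbr (r : state) (x : state) (i j : nat) : bool :=
  if Rle_dec (Rabs (x j - x i)) (r i) then true else false.

Definition nb_card (n : nat) (r x : state) (i : nat) : R :=
  fold_right Rplus 0 (map (fun j => if nbr r x i j then 1 else 0) (seq 0 n)).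
Definition nb_sum (n : nat) (r x : state) (i : nat) : R :=
  fold_right Rplus 0 (map (fun j => if nbr r x i j then x j else 0) (seq 0 n)).

Definition rmin (n : nat) (r : state) : R := fold_right Rmin (r 0%nat) (map r (seq 0 n)).
Definition rmax (n : nat) (r : state) : R := fold_right Rmax (r 0%nat) (map r (seq 0 n)).

Definition step_C1 (n : nat) (r x u b : state) (i : nat) : R :=
  proj01 (nb_sum n r x i / nb_card n r x i + u i + b i).

(* A feedback strategy: at time t, given the trajectory history xs
   (only xs 0, ..., xs t are allowed to matter), choose delta_i(t), u_i(t). *)
Definition causal (n : nat) (F : nat -> (nat -> state) -> state) : Prop :=
  forall t xs ys, (forall s i, (s <= t)%nat -> (i < n)%nat -> xs s i = ys s i) ->
    forall i, (i < n)%nat -> F t xs i = F t ys i.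

Definition ft_robustly_reachable (n : nat) (r : state) (eta : R)
    (Sset : state -> Prop) : Prop :=
  exists (T : nat) (eps : R), (0 < T)%nat /\ 0 < eps < eta /\
  forall x0 : state, in_unit_cube n x0 ->
    Sset x0 \/
    exists (D U : nat -> (nat -> state) -> state),
      causal n D /\ causal n U /\
      (forall t xs i, (t < T)%nat -> (i < n)%nat ->
         eps <= D t xs i < eta /\
         - eta + D t xs i <= U t xs i <= eta - D t xs i) /\
      forall (b : nat -> state) (x : nat -> state),
        x 0%nat = x0 ->
        (forall t i, (t < T)%nat -> (i < n)%nat ->
           - D t x i <= b t i <= D t x i /\
           x (S t) i = step_C1 n r (x t) (U t x) (b t) i) ->
        exists t, (1 <= t <= T)%nat /\ Sset (x t).

Definition E1_set (n : nat) (x : state) : Prop :=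
  in_unit_cube n x /\
  exists i j, (i < n)%nat /\ (j < n)%nat /\ Rabs (x i - x j) >= 1.

(* Main.v *)
Require Import Defs.
From Stdlib Require Import Reals Lra Lia List.
Import ListNotations.
Open Scope R_scope.
Definition sumf (s m : nat) (f : nat -> R) : R := fold_right Rplus 0 (map f (seq s m)).

Lemma sumf_ext s m f g : (forall l, (s <= l < s + m)%nat -> f l = g l) ->
  sumf s m f = sumf s m g.
Proof.
  revert s; induction m; intros s H; unfold sumf; simpl; [reflexivity|].
  rewrite (H s) by lia. f_equal. apply IHm. intros l Hl; apply H; lia.
Qed.

Lemma sumf_le s m f g : (forall l, (s <= l < s + m)%nat -> f l <= g l) ->
  sumf s m f <= sumf s m g.
Proof.
  revert s; induction m; intros s H; unfold sumf; simpl; [lra|].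
  apply Rplus_le_compat. apply H; lia. apply IHm. intros l Hl; apply H; lia.
Qed.

Lemma sumf_lin s m f g a : sumf s m (fun l => f l - a * g l) = sumf s m f - a * sumf s m g.
Proof.
  revert s; induction m; intros s; unfold sumf; simpl; [ring|].
  unfold sumf in IHm. rewrite IHm. ring.
Qed.

Lemma sumf_const s m c : sumf s m (fun _ => c) = INR m * c.
Proof.
  revert s; induction m; intros s; unfold sumf; simpl map; simpl fold_right; [simpl; ring|].
  unfold sumf in IHm. rewrite IHm. rewrite S_INR. ring.
Qed.

Lemma sumf_single s m f k : (s <= k < s + m)%nat ->
  (forall l, (s <= l < s + m)%nat -> l <> k -> f l = 0) -> sumf s m f = f k.
Proof.
  revert s; induction m; intros s Hk H; [lia|].
  unfold sumf; simpl. fold (sumf (S s) m f).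
  destruct (Nat.eq_dec s k) as [->|Hne].
  - rewrite (sumf_ext _ _ f (fun _ => 0)). rewrite sumf_const. ring.
    intros l Hl; apply H; lia.
  - rewrite H by lia. rewrite IHm. ring. lia. intros l Hl Hl'; apply H; lia; lia.
Qed.

Lemma nbr_self r x i : 0 < r i -> nbr r x i i = true.
Proof.
  intros H. unfold nbr. destruct Rle_dec as [|n0]; [reflexivity|].
  exfalso; apply n0. replace (x i - x i) with 0 by ring. rewrite Rabs_R0. lra.
Qed.

Lemma card_ge1 n r x i : (i < n)%nat -> 0 < r i -> 1 <= nb_card n r x i.
Proof.
  intros Hi Hr. change (nb_card n r x i) with (sumf 0 n (fun j => if nbr r x i j then 1 else 0)).
  assert (E1 : sumf 0 n (fun l => if Nat.eqb l i then 1 else 0) = 1).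
  { rewrite (sumf_single 0 n _ i). rewrite Nat.eqb_refl. reflexivity. lia.
    intros l _ Hl. destruct (Nat.eqb_spec l i); [contradiction|reflexivity]. }
  rewrite <- E1. apply sumf_le. intros l Hl. destruct (Nat.eqb_spec l i).
  + subst. rewrite nbr_self by lra. lra.
  + destruct nbr; lra.
Qed.

Lemma diff_sum n r x i lo :
  nb_sum n r x i - lo * nb_card n r x i =
  sumf 0 n (fun l => if nbr r x i l then x l - lo else 0).
Proof.
  change (nb_sum n r x i) with (sumf 0 n (fun j => if nbr r x i j then x j else 0)).
  change (nb_card n r x i) with (sumf 0 n (fun j => if nbr r x i j then 1 else 0)).
  rewrite <- sumf_lin. apply sumf_ext. intros l _. destruct nbr; ring.
Qed.

Lemma avg_lo n r x i lo : (i < n)%nat -> 0 < r i ->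
  (forall l, (l < n)%nat -> nbr r x i l = true -> lo <= x l) ->
  lo <= nb_sum n r x i / nb_card n r x i.
Proof.
  intros Hi Hr H. pose proof (card_ge1 n r x i Hi Hr) as Hc.
  assert (0 <= nb_sum n r x i - lo * nb_card n r x i).
  { assert (Z : sumf 0 n (fun _ => 0) = 0) by (rewrite sumf_const; ring).
    rewrite diff_sum. rewrite <- Z at 1.
    apply sumf_le. intros l Hl; cbv beta. destruct nbr eqn:E; [|lra]. assert (Hl2 : (l < n)%nat) by lia; specialize (H l Hl2 E). lra. }
  apply (Rmult_le_reg_r (nb_card n r x i)); [lra|].
  unfold Rdiv. rewrite Rmult_assoc, Rinv_l by lra. lra.
Qed.

Lemma avg_hi n r x i hi : (i < n)%nat -> 0 < r i ->
  (forall l, (l < n)%nat -> nbr r x i l = true -> x l <= hi) ->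
  nb_sum n r x i / nb_card n r x i <= hi.
Proof.
  intros Hi Hr H. pose proof (card_ge1 n r x i Hi Hr) as Hc.
  assert (nb_sum n r x i - hi * nb_card n r x i <= 0).
  { assert (Z : sumf 0 n (fun _ => 0) = 0) by (rewrite sumf_const; ring).
    rewrite diff_sum. rewrite <- Z at 1.
    apply sumf_le. intros l Hl; cbv beta. destruct nbr eqn:E; [|lra]. assert (Hl2 : (l < n)%nat) by lia; specialize (H l Hl2 E). lra. }
  apply (Rmult_le_reg_r (nb_card n r x i)); [lra|].
  unfold Rdiv. rewrite Rmult_assoc, Rinv_l by lra. lra.
Qed.

Lemma avg_others n r x j k R : (j < n)%nat -> (k < n)%nat -> j <> k -> 0 < r j -> r j <= R ->
  (forall l, (l < n)%nat -> l <> k -> x l = 1) ->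
  1 - R / INR n <= nb_sum n r x j / nb_card n r x j.
Proof.
  intros Hj Hk Hjk Hr HR Hx. pose proof (card_ge1 n r x j Hj Hr) as Hc.
  assert (Hn : 0 < INR n) by (apply lt_0_INR; lia).
  assert (HD : nb_sum n r x j - 1 * nb_card n r x j = if nbr r x j k then x k - 1 else 0).
  { rewrite diff_sum. rewrite (sumf_single 0 n _ k). reflexivity. lia.
    intros l Hl Hlk. rewrite Hx by lia. destruct nbr; ring. }
  destruct (nbr r x j k) eqn:E.
  - assert (Hcard : nb_card n r x j = INR n).
    { change (nb_card n r x j) with (sumf 0 n (fun l => if nbr r x j l then 1 else 0)).
      rewrite (sumf_ext _ _ _ (fun _ => 1)). rewrite sumf_const. ring.
      intros l Hl. destruct (Nat.eq_dec l k) as [->|Hlk]. rewrite E; reflexivity.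
      unfold nbr. destruct Rle_dec as [|n0]; [reflexivity|]. exfalso; apply n0.
      rewrite !Hx by lia. replace (1-1) with 0 by ring. rewrite Rabs_R0. lra. }
    unfold nbr in E. destruct Rle_dec as [Hle|]; [|discriminate].
    rewrite (Hx j) in Hle by lia.
    assert (1 - x k <= Rabs (x k - 1)) by (rewrite Rabs_minus_sym; apply Rle_abs).
    rewrite Hcard in HD |- *.
    replace (nb_sum n r x j) with (INR n + (x k - 1)) by lra.
    assert (- R <= x k - 1) by lra.
    assert (-R / INR n <= (x k - 1) / INR n).
    { unfold Rdiv. apply Rmult_le_compat_r; [left; apply Rinv_0_lt_compat; lra| lra]. }
    replace ((INR n + (x k - 1)) / INR n) with (1 + (x k - 1) / INR n) by (field; lra).
    unfold Rdiv in *. lra.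
  - assert (nb_sum n r x j = nb_card n r x j) by lra.
    rewrite H. unfold Rdiv. rewrite Rinv_r by lra.
    assert (0 <= R * / INR n). { apply Rmult_le_pos; [lra| left; apply Rinv_0_lt_compat; lra]. }
    lra.
Qed.

Lemma proj_ge L v : L <= 1 -> L <= v -> L <= proj01 v.
Proof. unfold proj01, Rmin, Rmax; repeat destruct Rle_dec; lra. Qed.
Lemma proj_le H v : 0 <= H -> v <= H -> proj01 v <= H.
Proof. unfold proj01, Rmin, Rmax; repeat destruct Rle_dec; lra. Qed.
Lemma proj_range v : 0 <= proj01 v <= 1.
Proof. unfold proj01, Rmin, Rmax; repeat destruct Rle_dec; lra. Qed.
Lemma proj_one v : 1 <= v -> proj01 v = 1.
Proof. unfold proj01, Rmin, Rmax; repeat destruct Rle_dec; lra. Qed.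

Lemma fold_min_att (r : nat -> R) d s m :
  fold_right Rmin d (map r (seq s m)) = d \/
  exists l, (s <= l < s + m)%nat /\ fold_right Rmin d (map r (seq s m)) = r l.
Proof.
  revert s; induction m; intros s; simpl; [left; reflexivity|].
  destruct (Rle_dec (r s) (fold_right Rmin d (map r (seq (S s) m)))).
  - right. exists s. split; [lia|]. apply Rmin_left; auto.
  - rewrite Rmin_right by lra. destruct (IHm (S s)) as [E|[l [Hl E]]].
    + left; auto.
    + right; exists l; split; [lia|auto].
Qed.

Lemma fold_max_ge (r : nat -> R) d s m l : (s <= l < s + m)%nat ->
  r l <= fold_right Rmax d (map r (seq s m)).
Proof.
  revert s; induction m; intros s Hl; simpl; [lia|].
  destruct (Nat.eq_dec l s) as [->|].
  - apply Rmax_l.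
  - eapply Rle_trans; [apply IHm| apply Rmax_r]. lia.
Qed.
Theorem lemma3 (n : nat) (r : nat -> R) (eta : R) :
  (3 <= n)%nat ->
  (forall i, (i < n)%nat -> 0 < r i <= 1) ->
  0 < eta ->
  rmin n r < 1 ->
  eta > Rmax (rmin n r / 2) (rmax n r / INR n) ->
  ft_robustly_reachable n r eta (E1_set n).
Proof.
  intros Hn Hr Heta Hmin Hgt.
  assert (Hk : exists k, (k < n)%nat /\ rmin n r = r k).
  { destruct (fold_min_att r (r 0%nat) 0 n) as [E|[l [Hl E]]].
    - exists 0%nat. split; [lia|exact E].
    - exists l. split; [lia|exact E]. }
  destruct Hk as [k [Hkn Hrk]].
  assert (HRM : forall j, (j < n)%nat -> r j <= rmax n r).
  { intros j Hj. apply fold_max_ge. lia. }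
  pose proof (Rmax_l (rmin n r / 2) (rmax n r / INR n)) as H1.
  pose proof (Rmax_r (rmin n r / 2) (rmax n r / INR n)) as H2.
  set (RM := rmax n r) in *.
  assert (HnR : 0 < INR n) by (apply lt_0_INR; lia).
  assert (Hrk1 : r k < 1) by lra.
  assert (Hrk2 : r k < 2 * eta) by lra.
  set (a := eta - RM / INR n).
  set (bb := 2 * eta - r k).
  assert (Ha : 0 < a) by (unfold a; lra).
  assert (Hbb : 0 < bb) by (unfold bb; lra).
  set (d := Rmin (eta / 8) (Rmin (bb / 8) (a / 4))).
  assert (Hd0 : 0 < d).
  { unfold d. apply Rmin_glb_lt; [lra|]. apply Rmin_glb_lt; lra. }
  assert (Hd1 : d <= eta / 8) by apply Rmin_l.
  assert (Hd2 : d <= bb / 8) by (eapply Rle_trans; [apply Rmin_r| apply Rmin_l]).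
  assert (Hd3 : d <= a / 4) by (eapply Rle_trans; [apply Rmin_r| apply Rmin_r]).
  clearbody d.
  set (c := eta - 2 * d).
  assert (Hc : 0 < c) by (unfold c; lra).
  destruct (archimed_cor1 c Hc) as [N [HN HN0]].
  assert (HNc : 1 < INR N * c).
  { assert (0 < INR N) by (apply lt_0_INR; lia).
    apply (Rmult_lt_compat_l (INR N)) in HN; [|lra].
    rewrite Rinv_r in HN by lra. lra. }
  set (A := 1 - 2 * eta + 6 * d).
  set (U := fun (t : nat) (_ : nat -> state) (i : nat) =>
     if Nat.ltb t N then eta - d else if Nat.eqb t N then - eta + 3 * d
     else if Nat.eqb i k then - (eta - d) else eta - d).
  exists (N + 2 + N)%nat, d. split; [lia|]. split; [lra|].
  intros x0 Hx0. right.
  exists (fun _ _ _ => d), U.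
  split; [intros t xs ys _ i _; reflexivity|].
  split; [intros t xs ys _ i _; reflexivity|].
  split.
  { intros t xs i _ _. split; [lra|]. unfold U.
    destruct Nat.ltb; [lra|]. destruct Nat.eqb; [lra|]. destruct Nat.eqb; lra. }
  intros b x Hx0eq Hdyn.
  set (T := (N + 2 + N)%nat) in *.
  assert (Hrange : forall t i, (t <= T)%nat -> (i < n)%nat -> 0 <= x t i <= 1).
  { intros t i Ht Hi. destruct t as [|t].
    - rewrite Hx0eq. apply Hx0; auto.
    - destruct (Hdyn t i ltac:(lia) Hi) as [_ E]. rewrite E. apply proj_range. }
  assert (Hstep : forall t i, (t < T)%nat -> (i < n)%nat ->
     - d <= b t i <= d /\
     x (S t) i = proj01 (nb_sum n r (x t) i / nb_card n r (x t) i + U t x i + b t i)).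
  { intros t i Ht Hi. exact (Hdyn t i Ht Hi). }
  clear Hdyn.
  assert (P1 : forall t, (t <= N)%nat -> forall i, (i < n)%nat -> Rmin 1 (INR t * c) <= x t i).
  { induction t as [|t IH]; intros Ht i Hi.
    - simpl. rewrite Rmult_0_l. eapply Rle_trans; [apply Rmin_r|].
      rewrite Hx0eq. apply Hx0; auto.
    - destruct (Hstep t i ltac:(unfold T; lia) Hi) as [Hb E]. rewrite E.
      assert (Hav : Rmin 1 (INR t * c) <= nb_sum n r (x t) i / nb_card n r (x t) i).
      { apply avg_lo; [auto| apply Hr; auto|]. intros l Hl _. apply IH; [lia|auto]. }
      assert (HU : U t x i = eta - d).
      { unfold U. replace (Nat.ltb t N) with true; [reflexivity|].
        symmetry; apply Nat.ltb_lt; lia. }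
      rewrite HU. apply proj_ge; [apply Rmin_l|].
      rewrite S_INR. unfold Rmin in *. repeat destruct Rle_dec; unfold c in *; lra. }
  assert (HxN : forall i, (i < n)%nat -> x N i = 1).
  { intros i Hi. pose proof (P1 N (le_n N) i Hi) as P.
    rewrite Rmin_left in P by lra. pose proof (Hrange N i ltac:(unfold T; lia) Hi). lra. }
  set (H1' := Rmax 0 (1 - eta + 4 * d)).
  assert (HxN1 : forall i, (i < n)%nat -> 1 - eta + 2 * d <= x (S N) i <= H1').
  { intros i Hi. destruct (Hstep N i ltac:(unfold T; lia) Hi) as [Hb E]. rewrite E.
    assert (Hav1 : 1 <= nb_sum n r (x N) i / nb_card n r (x N) i).
    { apply avg_lo; [auto| apply Hr; auto|]. intros l Hl _. rewrite HxN; auto; lra. }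
    assert (Hav2 : nb_sum n r (x N) i / nb_card n r (x N) i <= 1).
    { apply avg_hi; [auto| apply Hr; auto|]. intros l Hl _. rewrite HxN; auto; lra. }
    assert (HU : U N x i = - eta + 3 * d).
    { unfold U. rewrite Nat.ltb_irrefl, Nat.eqb_refl. reflexivity. }
    rewrite HU. split.
    - apply proj_ge; lra.
    - apply proj_le; [apply Rmax_l|]. eapply Rle_trans; [|apply Rmax_r]. lra. }
  assert (HUk : forall t i, (N < t)%nat -> U t x i = if Nat.eqb i k then - (eta - d) else eta - d).
  { intros t i Ht. unfold U. replace (Nat.ltb t N) with false by (symmetry; apply Nat.ltb_ge; lia).
    replace (Nat.eqb t N) with false by (symmetry; apply Nat.eqb_neq; lia). reflexivity. }
  assert (HcR : RM / INR n < c).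
  { unfold c. unfold a in Hd3. lra. }
  assert (P3 : forall s, (s <= N)%nat ->
     (forall j, (j < n)%nat -> j <> k -> x (N + 2 + s)%nat j = 1) /\
     x (N + 2 + s)%nat k <= Rmax 0 A /\
     x (N + 2 + s)%nat k <= Rmax 0 (1 - INR s * c)).
  { induction s as [|s IH]; intros Hs.
    - replace (N + 2 + 0)%nat with (S (S N)) by lia.
      assert (Hav : forall i, (i < n)%nat ->
        1 - eta + 2 * d <= nb_sum n r (x (S N)) i / nb_card n r (x (S N)) i <= H1').
      { intros i Hi. split.
        - apply avg_lo; [auto| apply Hr; auto|]. intros l Hl _. apply HxN1; auto.
        - apply avg_hi; [auto| apply Hr; auto|]. intros l Hl _. apply HxN1; auto. }
      split; [|split].
      + intros j Hj Hjk. destruct (Hstep (S N) j ltac:(unfold T; lia) Hj) as [Hb E]. rewrite E.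
        rewrite HUk by lia. replace (Nat.eqb j k) with false by (symmetry; apply Nat.eqb_neq; auto).
        apply proj_one. pose proof (Hav j Hj). unfold c in *. lra.
      + destruct (Hstep (S N) k ltac:(unfold T; lia) Hkn) as [Hb E]. rewrite E.
        rewrite HUk by lia. rewrite Nat.eqb_refl.
        apply proj_le; [apply Rmax_l|]. pose proof (Hav k Hkn).
        unfold H1', A, Rmax in *. repeat destruct Rle_dec; lra.
      + simpl. rewrite Rmult_0_l, Rminus_0_r, Rmax_right by lra.
        apply Hrange; [unfold T; lia| auto].
    - destruct (IH ltac:(lia)) as [Ho [HkA Hks]].
      set (t := (N + 2 + s)%nat) in *.
      replace (N + 2 + S s)%nat with (S t) by (unfold t; lia).
      assert (Ht : (t < T)%nat) by (unfold t, T; lia).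
      pose proof (Hrange t k ltac:(lia) Hkn) as Hxk.
      assert (Hiso : forall l, (l < n)%nat -> nbr r (x t) k l = true -> l = k).
      { intros l Hl E. destruct (Nat.eq_dec l k) as [|Hlk]; [auto|exfalso].
        unfold nbr in E. destruct Rle_dec as [Hle|]; [|discriminate].
        rewrite Ho in Hle by auto. rewrite Rabs_pos_eq in Hle by lra.
        unfold Rmax in HkA. unfold bb, A in *. destruct Rle_dec; lra. }
      split; [|split].
      + intros j Hj Hjk. destruct (Hstep t j Ht Hj) as [Hb E]. rewrite E.
        rewrite HUk by (unfold t; lia).
        replace (Nat.eqb j k) with false by (symmetry; apply Nat.eqb_neq; auto).
        apply proj_one.
        pose proof (avg_others n r (x t) j k RM Hj Hkn Hjk (proj1 (Hr j Hj)) (HRM j Hj) Ho).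
        unfold c in *; lra.
      + destruct (Hstep t k Ht Hkn) as [Hb E]. rewrite E.
        rewrite HUk by (unfold t; lia). rewrite Nat.eqb_refl.
        assert (Hav : nb_sum n r (x t) k / nb_card n r (x t) k <= x t k).
        { apply avg_hi; [auto| apply Hr; auto|]. intros l Hl El.
          rewrite (Hiso l Hl El). lra. }
        apply proj_le; [apply Rmax_l|]. lra.
      + destruct (Hstep t k Ht Hkn) as [Hb E]. rewrite E.
        rewrite HUk by (unfold t; lia). rewrite Nat.eqb_refl.
        assert (Hav : nb_sum n r (x t) k / nb_card n r (x t) k <= x t k).
        { apply avg_hi; [auto| apply Hr; auto|]. intros l Hl El.
          rewrite (Hiso l Hl El). lra. }
        apply proj_le; [apply Rmax_l|]. rewrite S_INR.
        unfold Rmax in Hks |- *. unfold c in *. repeat destruct Rle_dec; lra. }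
  destruct (P3 N (le_n N)) as [Ho [_ Hks]].
  fold T in Ho, Hks.
  assert (HxT : x T k = 0).
  { rewrite Rmax_left in Hks by lra. pose proof (Hrange T k (le_n T) Hkn). lra. }
  exists T. split; [unfold T; lia|].
  split.
  - intros i Hi. apply Hrange; auto.
  - set (j := if Nat.eqb k 0 then 1%nat else 0%nat).
    assert (Hj : (j < n)%nat /\ j <> k).
    { unfold j. destruct (Nat.eqb_spec k 0); lia. }
    exists k, j. split; [auto|]. split; [tauto|].
    rewrite HxT, (Ho j) by tauto. replace (0 - 1) with (-1) by ring.
    rewrite Rabs_left by lra. lra.
Qed.
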